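(* Let $G$ be a looped simple graph, $T$ a transversal of $W(G)$, and $B$ a basis of the transverse matroid $M[IAS(G)]|T$. Let $V_B=\{v\in V(G): B\cap\tau_G(v)\neq\emptyset\}$. Then there is a looped simple graph $H$ locally equivalent to $G$ and an induced isomorphism $\beta:M[IAS(G)]\to M[IAS(H)]$ such that (1) $V(G)\setminus V_B$ is a stable set of $H$, and (2) $\beta(T)=\{\phi_H(v):v\in V_B\}\cup\bigcup_{v\in V(G)\setminus V_B}\zeta_H(v)$.
   Context: A looped simple graph is a finite graph in which each vertex carries at most one loop and no two distinct vertices are joined by more than one edge. ''Adjacent''/''neighbors'' refer only to distinct vertices joined by a non-loop edge; $N_G(v)$ is the set of neighbors of $v$; a stable set is a set of vertices no two of which are adjacent. $A(G)$ is the $V(G)\times V(G)$ matrix over $GF(2)$ with diagonal entry $1$ exactly at looped vertices and off-diagonal entry $1$ exactly for adjacent pairs. $IAS(G)=(I\mid A(G)\mid A(G)+I)$ over $GF(2)$, rows indexed by $V(G)$; the $v$-columns of the three blocks are labelled $\phi_G(v),\chi_G(v),\psi_G(v)$. $M[IAS(G)]$ is the binary column matroid of $IAS(G)$ on $W(G)=\{\phi_G(v),\chi_G(v),\psi_G(v):v\in V(G)\}$. The vertex triple of $v$ is $\tau_G(v)=\{\phi_G(v),\chi_G(v),\psi_G(v)\}$; a transversal meets each vertex triple in exactly one element; a transverse matroid is the restriction of $M[IAS(G)]$ to a transversal. Neighborhood circuit: $\zeta_G(v)=\{\chi_G(v)\}\cup\{\phi_G(w):w\in N_G(v)\}$ if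 $v$ is unlooped, and $\{\psi_G(v)\}\cup\{\phi_G(w):w\in N_G(v)\}$ if $v$ is looped. Local equivalence: $G_\ell^v$ complements the loop status of $v$; $G_s^v$ complements the adjacency status of every pair of distinct neighbors of $v$; $G_{ns}^v$ does this and also complements the loop status of every neighbor of $v$. $H$ is locally equivalent to $G$ if obtained from $G$ by a finite sequence of such operations (so $V(H)=V(G)$). Induced isomorphisms: for each such operation producing $G'$ from $G$ there is a matroid isomorphism $M[IAS(G)]\to M[IAS(G')]$ sending $\alpha_G(x)\mapsto\alpha_{G'}(x)$ for all $\alpha\in\{\phi,\chi,\psi\}$, $x\in V(G)$, except: for $G'=G_\ell^v$, $\chi_G(v)\mapsto\psi_{G'}(v)$, $\psi_G(v)\mapsto\chi_{G'}(v)$; for $G'=G_{ns}^v$ with $v$ unlooped, $\phi_G(v)\mapsto\psi_{G'}(v)$, $\psi_G(v)\mapsto\phi_{G'}(v)$, and with $v$ looped, $\phi_G(v)\mapsto\chi_{G'}(v)$, $\chi_G(v)\mapsto\phi_{G'}(v)$; for $G'=G_s^v$, the same exchange at $v$ as for $G_{ns}^v$ and in addition, for every $w\in N_G(v)$, $\chi_G(w)\mapsto\psi_{G'}(w)$, $\psi_G(w)\mapsto\chi_{G'}(w)$. An induced isomorphism $M[IAS(G)]\to M[IAS(H)]$ is a composition of such isomorphisms along a sequence of operations transforming $G$ into $H$; it maps $\tau_G(v)$ onto $\tau_H(v)$ for every $v$. *)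

(* Defs.v *)
From HB Require Import structures.
From mathcomp Require Import all_boot all_order all_algebra.
Set Implicit Arguments. Unset Strict Implicit. Unset Printing Implicit Defensive.
Import GRing.Theory.

Record lgraph (V : finType) := LGraph { adj : rel V ; loop : pred V }.

Definition looped_simple (V : finType) (G : lgraph V) : Prop :=
  (forall x y, adj G x y = adj G y x) /\ (forall x, adj G x x = false).

(* Elements of W(G): pairs (v, k) with k : 'I_3;
   k = 0 is phi_G(v), k = 1 is chi_G(v), k = 2 is psi_G(v). *)
Definition kphi : 'I_3 := @Ordinal 3 0 isT.
Definition kchi : 'I_3 := @Ordinal 3 1 isT.
Definition kpsi : 'I_3 := @Ordinal 3 2 isT.

Definition Amx (V : finType) (G : lgraph V) (u v : V) : bool :=
  if u == v then loop G v else adj G u v.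

(* entry in row u of the column of IAS(G) labelled x *)
Definition IAS (V : finType) (G : lgraph V) (x : V * 'I_3) (u : V) : 'F_2 :=
  let: (v, k) := x in
  (if k == kphi then (u == v)%:R
  else if k == kchi then (Amx G u v)%:R
  else (Amx G u v)%:R + (u == v)%:R)%R.

(* independence in M[IAS(G)]: the columns are linearly independent over GF(2),
   i.e. no nonempty subset of them sums to zero. *)
Definition indep (V : finType) (G : lgraph V) (S : {set V * 'I_3}) : Prop :=
  forall X : {set V * 'I_3}, X \subset S ->
    (forall u : V, (\sum_(x in X) IAS G x u)%R = 0%R) -> X = set0.

Definition W_transversal (V : finType) (T : {set V * 'I_3}) : Prop :=
  forall v : V, #|[set k : 'I_3 | (v, k) \in T]| = 1%N.

Definition basis_of_restr (V : finType) (G : lgraph V) (T B : {set V * 'I_3}) : Prop :=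
  [/\ B \subset T, indep G B &
      forall B' : {set V * 'I_3}, B \subset B' -> B' \subset T -> indep G B' -> B' = B].

Definition stable_set (V : finType) (G : lgraph V) (S : {set V}) : Prop :=
  forall x y, x \in S -> y \in S -> adj G x y = false.

Definition zeta (V : finType) (G : lgraph V) (v : V) : {set V * 'I_3} :=
  (v, if loop G v then kpsi else kchi) |: [set (w, kphi) | w in [set w | adj G v w]].

Inductive lop := OpL | OpS | OpNS.

Definition op_graph (V : finType) (o : lop) (v : V) (G : lgraph V) : lgraph V :=
  match o with
  | OpL => LGraph (adj G) (fun x => if x == v then ~~ loop G x else loop G x)
  | OpS => LGraph (fun x y => adj G x y (+) [&& adj G v x, adj G v y & x != y])
                  (loop G)
  | OpNS => LGraph (fun x y => adj G x y (+) [&& adj G v x, adj G v y & x != y])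
                   (fun x => loop G x (+) adj G v x)
  end.

Definition xch (V : finType) (w : V) (a b : 'I_3) (x : V * 'I_3) : V * 'I_3 :=
  if x.1 == w then
    (if x.2 == a then (w, b) else if x.2 == b then (w, a) else x)
  else x.

Definition op_map (V : finType) (o : lop) (v : V) (G : lgraph V)
    (x : V * 'I_3) : V * 'I_3 :=
  let ns_exch := if loop G v then xch v kphi kchi x else xch v kphi kpsi x in
  match o with
  | OpL => xch v kchi kpsi x
  | OpNS => ns_exch
  | OpS => if x.1 == v then ns_exch
           else if adj G v x.1 then xch x.1 kchi kpsi x else x
  end.

(* applying a sequence of operations (first element applied first):
   returns the resulting graph H and the composed induced isomorphism *)
Fixpoint run (V : finType) (ops : seq (lop * V)) (G : lgraph V)
    : lgraph V * (V * 'I_3 -> V * 'I_3) :=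
  match ops with
  | [::] => (G, id)
  | (o, v) :: os =>
      let r := run os (op_graph o v G) in
      (r.1, fun x => r.2 (op_map o v G x))
  end.

(* Main.v *)
Set Warnings "-notation-overridden,-ambiguous-paths,-notation-incompatible-prefix".
Require Import Defs.
From HB Require Import structures.
From mathcomp Require Import all_boot all_order all_algebra.
Set Implicit Arguments. Unset Strict Implicit. Unset Printing Implicit Defensive.
Import GRing.Theory.
Local Open Scope ring_scope.

Definition b2F (b : bool) : 'F_2 := b%:R.
Lemma b2F_add a b : b2F a + b2F b = b2F (a (+) b).
Proof. by case: a; case: b; apply/eqP. Qed.
Lemma b2F_mul a b : b2F a * b2F b = b2F (a && b).
Proof. by case: a; case: b; apply/eqP. Qed.
Lemma b2F_inj a b : b2F a = b2F b -> a = b.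
Proof. by case: a; case: b => // /eqP. Qed.
Lemma b2F0 : 0 = b2F false. Proof. by []. Qed.
Lemma F2_addxx (x : 'F_2) : x + x = 0.
Proof. by case: x => [[|[|]]] //= ?; apply/eqP. Qed.

Section S.
Variable V : finType.
Implicit Types (G : lgraph V) (T B X S : {set V * 'I_3}).

Lemma xchK (w : V) (a b : 'I_3) x : a != b -> xch w a b (xch w a b x) = x.
Proof.
move=> ab; case: x => y k; rewrite /xch /=.
case: (eqVneq y w) => [->|yw] /=; last by rewrite (negbTE yw).
case: (eqVneq k a) => [->|ka] /=; first by rewrite !eqxx /= eq_sym (negbTE ab).
case: (eqVneq k b) => [->|kb] /=; first by rewrite !eqxx.
by rewrite eqxx (negbTE ka) (negbTE kb).
Qed.

Lemma xch1 (w : V) a b x : (xch w a b x).1 = x.1.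
Proof. case: x => y k; rewrite /xch /=; case: eqP => [->|] //; by case: (k == a) => //; case: (k == b). Qed.

Lemma op_map1 o v G x : (op_map o v G x).1 = x.1.
Proof. by case: o; rewrite /op_map; do ?case: ifP => _; rewrite ?xch1. Qed.

Lemma op_mapK o v G x : op_map o v G (op_map o v G x) = x.
Proof.
rewrite /op_map; case: o.
- by rewrite xchK.
- case: x => w k /=.
  case: (eqVneq w v) => [->|ne].
    by case: (loop G v); rewrite !xch1 /= eqxx xchK.
  case: (boolP (adj G v w)) => a.
    by rewrite !xch1 /= (negbTE ne) a xchK.
  by rewrite /= (negbTE ne) (negbTE a).
- by case: (loop G v); rewrite xchK.
Qed.

Lemma op_map_inj o v G : injective (op_map o v G).
Proof. exact: (can_inj (@op_mapK o v G)). Qed.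


Lemma I3P (k : 'I_3) : [\/ k = kphi, k = kchi | k = kpsi].
Proof.
case: k => [[|[|[|m]]] Hk].
- by apply: Or31; apply: val_inj.
- by apply: Or32; apply: val_inj.
- by apply: Or33; apply: val_inj.
- by [].
Qed.

Lemma k01 : (kphi == kchi) = false. Proof. by []. Qed.
Lemma k02 : (kphi == kpsi) = false. Proof. by []. Qed.
Lemma k10 : (kchi == kphi) = false. Proof. by []. Qed.
Lemma k12 : (kchi == kpsi) = false. Proof. by []. Qed.
Lemma k20 : (kpsi == kphi) = false. Proof. by []. Qed.
Lemma k21 : (kpsi == kchi) = false. Proof. by []. Qed.
Definition kE := (k01, k02, k10, k12, k20, k21).

Lemma IASE G w k u : IAS G (w, k) u =
  b2F (if k == kphi then u == w else if k == kchi then Amx G u w else Amx G u w (+) (u == w)).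
Proof. by rewrite /IAS; case: ifP => _ //; case: ifP => _ //; rewrite b2F_add. Qed.

Definition nvec o v G (u : V) : 'F_2 := if o is OpL then 0 else b2F (adj G v u).

Ltac clean_neq := repeat match goal with
 | h : is_true (?a != ?b) |- context[?a == ?b] => rewrite (negbTE h)
 | h : is_true (?a != ?b) |- context[?b == ?a] => rewrite [b == a]eq_sym (negbTE h)
 | |- context[?a == ?a] => rewrite eqxx
 end.

Lemma IASE' G x u : IAS G x u =
  b2F (if x.2 == kphi then u == x.1 else if x.2 == kchi then Amx G u x.1 else Amx G u x.1 (+) (u == x.1)).
Proof. by case: x => w k; rewrite IASE. Qed.

Ltac symnorm sym := repeat match goal with |- context[adj ?G ?a ?b] =>
  match goal with |- context[adj G b a] => assert_fails (constr_eq a b); rewrite [adj G a b]sym end end.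
Ltac bdestr := repeat match goal with
  | |- context[adj ?G ?a ?b] => case: (adj G a b)
  | |- context[loop ?G ?a] => case: (loop G a) end; try by [].

Ltac useeq adjsym := repeat match goal with
  | H : loop ?G ?a = _ |- context[loop ?G ?a] => rewrite H
  | H : adj ?G ?a ?b = _ |- context[adj ?G ?a ?b] => rewrite H
  | H : adj ?G ?a ?b = _ |- context[adj ?G ?b ?a] => rewrite [adj G b a]adjsym H end.
Ltac bstep := match goal with
  | |- context[adj ?G ?a ?b] => is_var a; is_var b; let E := fresh "E" in case E: (adj G a b)
  | |- context[loop ?G ?a] => is_var a; let E := fresh "E" in case E: (loop G a) end.
Ltac fin sym irr := rewrite /= ?kE ?eqxx ?irr /=; clean_neq; symnorm sym; useeq sym;
  tryif bstep then fin sym irr else (try by apply/eqP).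

Lemma IAS_op o v G x u : looped_simple G ->
  IAS (op_graph o v G) (op_map o v G x) u = IAS G x u + nvec o v G u * IAS G x v.
Proof.
case=> sym irr; case: x => w k.
rewrite !IASE' /nvec.
have [->|->|->] := I3P k; case: (eqVneq w v) => [?|wv]; subst;
case: (eqVneq u v) => [?|uv]; subst; (try case: (eqVneq u w) => [?|uw]); subst; case: o;
rewrite /op_map /op_graph /xch /Amx /nvec /=; clean_neq; rewrite ?irr ?kE ?eqxx /=; symnorm sym;
fin sym irr.
Qed.


Lemma sum_op o v G X u : looped_simple G ->
  \sum_(y in op_map o v G @: X) IAS (op_graph o v G) y u =
  \sum_(x in X) IAS G x u + nvec o v G u * \sum_(x in X) IAS G x v.
Proof.
move=> HG; rewrite big_imset /=; last by move=> x y _ _; apply: op_map_inj.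
rewrite (eq_bigr _ (fun x _ => IAS_op o v x u HG)) big_split /= mulr_sumr //.
Qed.

Lemma nvec_v o v G : looped_simple G -> nvec o v G v = 0.
Proof. by case=> _ irr; case: o; rewrite /nvec ?irr. Qed.

Lemma zero_op o v G X : looped_simple G ->
  (forall u, \sum_(x in X) IAS G x u = 0) <->
  (forall u, \sum_(y in op_map o v G @: X) IAS (op_graph o v G) y u = 0).
Proof.
move=> HG; split=> H u; first by rewrite sum_op // !H mulr0 addr0.
have Hv := H v; rewrite sum_op // nvec_v // mul0r addr0 in Hv.
by have := H u; rewrite sum_op // Hv mulr0 addr0.
Qed.

Lemma imsetK_op o v G (S : {set V * 'I_3}) : op_map o v G @: (op_map o v G @: S) = S.
Proof.
by rewrite -imset_comp (eq_imset (g := id)) ?imset_id // => x /=; rewrite op_mapK.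
Qed.

Lemma indep_op o v G S : looped_simple G ->
  indep G S <-> indep (op_graph o v G) (op_map o v G @: S).
Proof.
move=> HG; split=> HI X.
- move=> sX HX; set Y := op_map o v G @: X.
  have eX : X = op_map o v G @: Y by rewrite imsetK_op.
  have sY : Y \subset S.
    apply/subsetP=> y /imsetP[x xX ->].
    have /imsetP[s sS ->] := subsetP sX x xX.
    by rewrite op_mapK.
  rewrite eX in HX.
  have Y0 : Y = set0 by exact: (HI Y sY (proj2 (zero_op o v Y HG) HX)).
  by rewrite eX Y0 imset0.
- move=> sX HX; have := HI (op_map o v G @: X).
  move=> /(_ (imsetS _ sX)) /(_ ((zero_op o v X HG).1 HX)) /eqP.
  by rewrite imset_eq0 => /eqP.
Qed.

Definition VBof (B : {set V * 'I_3}) := [set v | [exists k, (v,k) \in B]].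

Lemma ls_op o v G : looped_simple G -> looped_simple (op_graph o v G).
Proof.
case=> sym irr; case: o; split=> x //=; rewrite ?irr ?eqxx ?andbF //.
- by move=> y; rewrite sym [y == x]eq_sym andbCA.
- by move=> y; rewrite sym [y == x]eq_sym andbCA.
Qed.

Lemma fpair o v G u k : (u, (op_map o v G (u,k)).2) = op_map o v G (u,k).
Proof. by case E: (op_map o v G (u,k)) => [a b]; have := op_map1 o v G (u,k); rewrite E /= => ->. Qed.

Lemma WT_op o v G T : W_transversal T -> W_transversal (op_map o v G @: T).
Proof.
move=> HT u.
have -> : [set k | (u,k) \in op_map o v G @: T] =
          [set (op_map o v G (u,k)).2 | k in [set k | (u,k) \in T]].
  apply/setP=> k; rewrite inE; apply/imsetP/imsetP.
  - case=> y yT e.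
    have e1 : y.1 = u by rewrite -(op_map1 o v G y) -e.
    have ey : (u, y.2) = y by rewrite -e1 -surjective_pairing.
    by exists y.2; [rewrite inE ey | rewrite ey -e].
  - case=> k'; rewrite inE => kT ->; exists (u,k') => //.
    by rewrite fpair.
rewrite card_imset; first exact: HT.
move=> k1 k2 e; have : op_map o v G (u,k1) = op_map o v G (u,k2) by rewrite -(fpair o v G u k1) -(fpair o v G u k2) e.
by move/op_map_inj=> [].
Qed.

Lemma VB_op o v G B : VBof (op_map o v G @: B) = VBof B.
Proof.
apply/setP=> u; rewrite !inE; apply/existsP/existsP.
- case=> k /imsetP[y yB e]; exists y.2.
  have e1 : y.1 = u by rewrite -(op_map1 o v G y) -e.
  by rewrite -e1 -surjective_pairing.
- case=> k kB; exists (op_map o v G (u,k)).2.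
  by rewrite fpair imset_f.
Qed.

Lemma basis_op o v G T B : looped_simple G -> basis_of_restr G T B ->
  basis_of_restr (op_graph o v G) (op_map o v G @: T) (op_map o v G @: B).
Proof.
move=> HG [sBT iB mx]; split; first exact: imsetS.
- exact/(indep_op o v B HG).
- move=> B2 sB sT iB2.
  have e : op_map o v G @: B2 = B.
    apply: mx.
    + by rewrite -(imsetK_op o v G B) imsetS.
    + by rewrite -(imsetK_op o v G T) imsetS.
    + by apply/(indep_op o v _ HG); rewrite imsetK_op.
  by rewrite -e imsetK_op.
Qed.

Definition inv G T B := [/\ looped_simple G, W_transversal T & basis_of_restr G T B].

Lemma inv_op o v G T B : inv G T B ->
  inv (op_graph o v G) (op_map o v G @: T) (op_map o v G @: B).
Proof. by case=> HG HT HB; split; [apply: ls_op | apply: WT_op | apply: basis_op]. Qed.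

Lemma sum_b2F_eq (U : finType) (A : {set U}) (x : U) :
  \sum_(w in A) b2F (x == w) = b2F (x \in A).
Proof.
case: (boolP (x \in A)) => xA.
  rewrite (bigD1 x) //= eqxx big1 ?addr0 // => w /andP[_ nw].
  by rewrite eq_sym (negbTE nw).
by rewrite big1 // => w wA; case: eqP => // e; rewrite e wA in xA.
Qed.

Lemma WT_uniq T u k1 k2 : W_transversal T -> (u,k1) \in T -> (u,k2) \in T -> k1 = k2.
Proof.
move=> HT h1 h2; have /cards1P[k e] : #|[set k | (u,k) \in T]| == 1 by rewrite HT.
have : k1 \in [set k | (u,k) \in T] by rewrite inE.
have : k2 \in [set k | (u,k) \in T] by rewrite inE.
by rewrite e !inE => /eqP -> /eqP ->.
Qed.

Lemma WT_ex T u : W_transversal T -> exists k, (u,k) \in T.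
Proof.
move=> HT; have : [set k | (u,k) \in T] != set0 by rewrite -card_gt0 HT.
by case/set0Pn=> k; rewrite inE; exists k.
Qed.

Lemma label_B G T B u k : inv G T B -> u \in VBof B -> (u,k) \in T -> (u,k) \in B.
Proof.
case=> _ HT [sBT _ _]; rewrite inE => /existsP[k' kB] kT.
by rewrite (WT_uniq HT kT (subsetP sBT _ kB)).
Qed.

Definition diag G u := if loop G u then kpsi else kchi.

Lemma IAS_diag G u x : looped_simple G -> IAS G (u, diag G u) x = b2F (adj G x u).
Proof.
case=> sym irr; rewrite IASE /diag /Amx; case: (eqVneq x u) => [->|xu].
  by rewrite irr; case: (loop G u); rewrite ?kE ?eqxx.
by case: (loop G u); rewrite ?kE ?eqxx /= ?addbF.
Qed.

Lemma IAS_phi G w x : IAS G (w, kphi) x = b2F (x == w).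
Proof. by rewrite IASE eqxx. Qed.

Lemma caseC G T B u : inv G T B -> u \in VBof B -> (u, diag G u) \in T ->
  (forall w, adj G u w -> ((w,kphi) \in T) && (w \in VBof B)) -> False.
Proof.
move=> Hi uB uT Hw; have Hi' := Hi; case: Hi' => HG HT [sBT iB _].
set N := [set w | adj G u w].
set X := (u, diag G u) |: [set (w, kphi) | w in N].
have nX : (u, diag G u) \notin [set (w, kphi) | w in N].
  by apply/imsetP=> [[w _ []]] _; rewrite /diag; case: (loop G u).
have : X = set0.
  apply: iB.
  - apply/subsetP=> x; rewrite in_setU1 => /orP[/eqP ->|/imsetP[w]].
      exact: (label_B Hi uB uT).
    rewrite inE => /Hw /andP[wT wB] ->; exact: (label_B Hi wB wT).
  - move=> x; rewrite big_setU1 // IAS_diag // big_imset; last by move=> a b _ _ [].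
    rewrite (eq_bigr _ (fun w _ => IAS_phi G w x)) sum_b2F_eq inE.
    by case: HG => sym _; rewrite sym; exact: F2_addxx.
by move/setP/(_ (u, diag G u)); rewrite setU11 inE.
Qed.

Lemma base_P G T B u k : inv G T B -> (forall v, v \in VBof B -> (v,kphi) \in T) ->
  u \notin VBof B -> (u,k) \in T ->
  (k == diag G u) && [forall w, adj G u w ==> (w \in VBof B)].
Proof.
move=> Hi Hall uB uT; case: (Hi) => HG HT [sBT iB mx].
have Bphi : forall y, y \in B -> y = (y.1, kphi) /\ y.1 \in VBof B.
  move=> [w k'] yB /=; have wB : w \in VBof B by rewrite inE; apply/existsP; exists k'.
  split=> //; congr pair; exact: (WT_uniq HT (subsetP sBT _ yB) (Hall _ wB)).
case: (boolP ((k == diag G u) && [forall w, adj G u w ==> (w \in VBof B)])) => // nP.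
have iB' : indep G ((u,k) |: B).
  move=> X sX HX.
  case: (boolP ((u,k) \in X)) => ukX; last first.
    apply: iB => //; apply/subsetP=> x xX; have := subsetP sX x xX.
    by rewrite in_setU1 => /orP[/eqP e|//]; rewrite -e xX in ukX.
  exfalso; move/negP: nP; apply.
  set Y := X :\ (u,k).
  have sY : Y \subset B.
    apply/subsetP=> y; rewrite !inE => /andP[ny yX]; have := subsetP sX y yX.
    by rewrite in_setU1 (negbTE ny).
  have HS : forall x, IAS G (u,k) x + b2F ((x,kphi) \in Y) = 0.
    move=> x; rewrite -(HX x).
    have -> : \sum_(i in X) IAS G i x = IAS G (u,k) x + \sum_(i in Y) IAS G i x.
      by rewrite (big_setD1 _ ukX).
    congr (_ + _); rewrite -sum_b2F_eq; apply: eq_bigr => y yY.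
    have [e _] := Bphi y (subsetP sY y yY).
    by rewrite e IAS_phi xpair_eqE eqxx andbT.
  have uY : (u,kphi) \notin Y.
    by apply/negP => /(subsetP sY) /Bphi [_ /= uB']; rewrite uB' in uB.
  have kd : k = diag G u.
    have := HS u; rewrite (negbTE uY) IASE /Amx eqxx /diag.
    have [e|e|e] := I3P k; rewrite e; case: (loop G u); rewrite ?kE ?eqxx /=;
      rewrite b2F_add ?b2F0 => /b2F_inj //.
  rewrite kd eqxx /=; apply/forallP=> w; apply/implyP=> uw.
  have := HS w; rewrite kd IAS_diag //; case: HG => sym irr; rewrite sym uw.
  case: (boolP ((w,kphi) \in Y)) => wY.
    by have [_ /= ] := Bphi _ (subsetP sY _ wY).
  by rewrite b2F_add b2F0 => /b2F_inj.
have e := mx ((u,k) |: B) (subsetU1 _ _) _ iB'.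
have : (u,k) \in B.
  rewrite -e ?setU11 //; apply/subsetP=> x; rewrite in_setU1 => /orP[/eqP ->//|].
  exact: (subsetP sBT).
by move=> ukB; move: uB; rewrite inE; case/existsP; exists k.
Qed.

Definition concl G T B := exists ops : seq (lop * V),
    let H := (run ops G).1 in
    let beta := (run ops G).2 in
    [/\ looped_simple H,
        stable_set H (~: VBof B) &
        beta @: T = [set (v, kphi) | v in VBof B] :|: \bigcup_(v in ~: VBof B) zeta H v].

Lemma base G T B : inv G T B -> (forall v, v \in VBof B -> (v,kphi) \in T) -> concl G T B.
Proof.
move=> Hi Hall; have Hi' := Hi; case: Hi' => HG HT _.
have HP u : u \notin VBof B -> (u, diag G u) \in T /\ forall w, adj G u w -> w \in VBof B.
  move=> uB; have [k uk] := WT_ex u HT.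
  have /andP[/eqP kd /forallP Hf] := base_P Hi Hall uB uk.
  split; first by rewrite -kd.
  by move=> w uw; have /implyP := Hf w; apply.
exists [::]; rewrite /=; split => //.
- move=> x y; rewrite !in_setC => xB yB; apply/negP => xy.
  by have [_ H] := HP x xB; rewrite (H y xy) in yB.
- have -> : [set id x | x in T] = T.
    by apply/setP=> x; apply/imsetP/idP => [[y yT ->]|xT] //; exists x.
  apply/setP => [[x k]]; rewrite in_setU; apply/idP/orP.
  + move=> xkT; case: (boolP (x \in VBof B)) => xB.
    * by left; rewrite (WT_uniq HT xkT (Hall x xB)); exact: imset_f.
    * right; apply/bigcupP; exists x; first by rewrite in_setC.
      have [xd _] := HP x xB; rewrite (WT_uniq HT xkT xd) /zeta; exact: setU11.
  + case=> [/imsetP[v vB [-> ->]]|/bigcupP[v]]; first exact: Hall.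
    rewrite in_setC => vB; have [vd Hv] := HP v vB.
    rewrite /zeta in_setU1 => /orP[/eqP [-> ->]|/imsetP[w]]; first exact: vd.
    by rewrite inE => vw [-> ->]; exact: Hall (Hv _ vw).
Qed.

Lemma concl_op o v G T B :
  concl (op_graph o v G) (op_map o v G @: T) (op_map o v G @: B) -> concl G T B.
Proof.
case=> ops /= [H1 H2 H3]; exists ((o,v) :: ops) => /=.
rewrite VB_op in H2 H3; split=> //.
by rewrite -H3 imset_comp.
Qed.

Definition PT (T : {set V * 'I_3}) := [set u | (u,kphi) \notin T].
Lemma inPT T x : (x \in PT T) = ((x,kphi) \notin T). Proof. by rewrite inE. Qed.
Definition meas T B := #|VBof B :&: PT T|.

Lemma caseA G T B u d : inv G T B -> u \in VBof B -> (u,d) \in T -> d != kphi ->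
  d != diag G u ->
  (meas (op_map OpNS u G @: T) (op_map OpNS u G @: B) < meas T B)%N.
Proof.
move=> Hi uB ud dphi ddiag; case: (Hi) => HG HT _.
set f := op_map OpNS u G.
have fix_ : forall y, y.1 != u -> f y = y.
  move=> [a b] /= au; rewrite /f /op_map /xch /= (negbTE au); by case: (loop G u).
have memfix : forall x k, x != u -> ((x,k) \in f @: T) = ((x,k) \in T).
  move=> x k xu; apply/imsetP/idP => [[y yT e]|xT]; last by exists (x,k) => //; rewrite fix_.
  have e1 : y.1 = x by rewrite -(op_map1 OpNS u G y) -/f -e.
  by rewrite e fix_ ?e1 // -surjective_pairing.
have uphi : (u,kphi) \in f @: T.
  apply/imsetP; exists (u,d) => //.
  move: ddiag dphi; rewrite /f /op_map /diag /xch /= eqxx.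
  by have [->|->|->] := I3P d; case: (loop G u); rewrite ?kE ?eqxx.
rewrite /meas VB_op; apply: proper_card; apply/properP; split.
  apply/subsetP=> x; rewrite !in_setI !inPT => /andP[xB xT]; rewrite xB /=.
  case: (eqVneq x u) => [e|xu]; first by rewrite e uphi in xT.
  by rewrite -(memfix x kphi xu).
exists u; last by rewrite in_setI inPT uphi andbF.
rewrite in_setI inPT uB /=; apply/negP => uT.
by rewrite (WT_uniq HT ud uT) eqxx in dphi.
Qed.

Lemma caseB G T B u w : inv G T B -> (u, diag G u) \in T -> adj G u w ->
  ~~ (((w,kphi) \in T) && (w \in VBof B)) ->
  (meas (op_map OpS w G @: T) (op_map OpS w G @: B) <= meas T B)%N /\
  (u, if loop G u then kchi else kpsi) \in op_map OpS w G @: T.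
Proof.
move=> Hi ud uw nw; case: (Hi) => HG HT _; have [sym irr] := HG.
have wu : w != u by apply/eqP => e; rewrite e irr in uw.
set f := op_map OpS w G.
have phifix : forall x, x != w -> ((x,kphi) \in f @: T) = ((x,kphi) \in T).
  move=> x xw; apply/imsetP/idP => [[y yT e]|xT].
  - have e1 : y.1 = x by rewrite -(op_map1 OpS w G y) -/f -e.
    move: e yT; case: y e1 => a b /= ->.
    rewrite /f /op_map /= (negbTE xw).
    have [->|->|->] := I3P b; case: (adj G w x); rewrite /xch /= ?eqxx ?kE //;
      move=> /eqP; rewrite ?xpair_eqE ?kE ?eqxx ?andbF //.
  - exists (x,kphi) => //; rewrite /f /op_map /= (negbTE xw).
    by case: (adj G w x); rewrite /xch /= ?eqxx ?kE.
split.
  rewrite /meas VB_op; apply: subset_leq_card; apply/subsetP => x.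
  rewrite !in_setI !inPT => /andP[xB xT]; rewrite xB /=.
  case: (eqVneq x w) => [e|xw]; last by rewrite -(phifix x xw).
  by subst x; rewrite xB andbT in nw.
apply/imsetP; exists (u, diag G u) => //.
rewrite /f /op_map /= eq_sym (negbTE wu) sym uw /diag /xch /= eqxx.
by case: (loop G u); rewrite ?eqxx ?kE.
Qed.

Lemma main n : forall G T B, inv G T B -> (meas T B < n)%N -> concl G T B.
Proof.
elim: n => [|n IH] G T B Hi Hm //.
have Hi' := Hi; case: Hi' => HG HT _.
have [e0|] := eqVneq (VBof B :&: PT T) set0.
  apply: base Hi _ => v vB; apply/negPn/negP => vT.
  have : v \in VBof B :&: PT T by rewrite in_setI inPT vB.
  by rewrite e0 inE.
case/set0Pn => u; rewrite in_setI inPT => /andP[uB uT].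
have [k uk] := WT_ex u HT.
have kphi_ne : k != kphi by apply/eqP => e; move: uk; rewrite e (negbTE uT).
case: (eqVneq k (diag G u)) => [kd|kd]; last first.
  apply: (concl_op (o:=OpNS) (v:=u)); apply: IH; first exact: inv_op.
  exact: leq_trans (caseA Hi uB uk kphi_ne kd) Hm.
subst k.
case: (boolP [exists w, adj G u w && ~~ (((w,kphi) \in T) && (w \in VBof B))]).
  case/existsP=> w /andP[uw nw].
  have [Hm1 ud1] := caseB Hi uk uw nw.
  apply: (concl_op (o:=OpS) (v:=w)).
  have Hi1 := inv_op OpS w Hi.
  apply: (concl_op (o:=OpNS) (v:=u)); apply: IH; first exact: inv_op.
  have uB1 : u \in VBof (op_map OpS w G @: B) by rewrite VB_op.
  have d1 : (if loop G u then kchi else kpsi) != kphi by case: (loop G u).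
  have d2 : (if loop G u then kchi else kpsi) != diag (op_graph OpS w G) u.
    by rewrite /diag /=; case: (loop G u).
  have h2 := caseA Hi1 uB1 ud1 d1 d2.
  exact: leq_trans h2 (leq_trans Hm1 Hm).
move=> nex; exfalso; apply: (caseC Hi uB uk) => w uw.
by move/existsPn: nex => /(_ w); rewrite uw /= negbK.
Qed.
End S.
Local Close Scope ring_scope.

Theorem theorem4p3 (V : finType) (G : lgraph V) (T B : {set V * 'I_3}) :
  looped_simple G -> W_transversal T -> basis_of_restr G T B ->
  let VB := [set v : V | [exists k : 'I_3, (v, k) \in B]] in
  exists ops : seq (lop * V),
    let H := (run ops G).1 in
    let beta := (run ops G).2 in
    [/\ looped_simple H,
        stable_set H (~: VB) &
        beta @: T = [set (v, kphi) | v in VB] :|: \bigcup_(v in ~: VB) zeta H v].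
Proof.
move=> HG HT HB.
have := @main V (meas T B).+1 G T B (And3 HG HT HB) (ltnSn _).
by [].
Qed.
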